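(* Let $c:[\omega_2]^2\to\omega$, let $k\in\omega$, and let $A\in[\omega_1]^{\aleph_1}$ and $B\in[\omega_2\setminus\omega_1]^{\aleph_1}$ satisfy: (1) for any $\alpha_0,\alpha_1\in A$ there are uncountably many $\beta\in B$ with $c(\alpha_0,\beta)=k=c(\alpha_1,\beta)$; and (2) for any $\beta_0\in B$ there are uncountably many $\alpha\in A$ with $c(\alpha,\beta_0)=k$. Then $(A\cup B, c^{-1}(k)\cap[A\cup B]^2)$ is highly connected.
   Context: A graph $G=(X,E)$ is highly connected if for every $Y\subseteq X$ with $|Y|<|X|$, the induced subgraph $(X\setminus Y,E\cap[X\setminus Y]^2)$ is connected. *)

(* Defs.v *)
From Stdlib Require Import Relations Relation_Operators Wellfounded.

Definition injects {A B : Type} (P : A -> Prop) (Q : B -> Prop) : Prop :=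
  exists f : A -> B,
    (forall x, P x -> Q (f x)) /\
    (forall x y, P x -> P y -> f x = f y -> x = y).

Definition equipotent {A B : Type} (P : A -> Prop) (Q : B -> Prop) : Prop :=
  injects P Q /\ injects Q P.

Definition card_lt {A B : Type} (P : A -> Prop) (Q : B -> Prop) : Prop :=
  injects P Q /\ ~ injects Q P.

Definition countable {A : Type} (P : A -> Prop) : Prop :=
  injects P (fun _ : nat => True).

Definition strict_wellorder {T : Type} (lt : T -> T -> Prop) : Prop :=
  (forall x, ~ lt x x) /\
  (forall x y z, lt x y -> lt y z -> lt x z) /\
  (forall x y, lt x y \/ x = y \/ lt y x) /\
  well_founded lt.

(* Inside a well-order (T, lt): the initial segment of elements with
   countably many predecessors.  When (T, lt) is ω2 this is exactly ω1. *)
Definition omega1_part {T : Type} (lt : T -> T -> Prop) (x : T) : Prop :=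
  countable (fun y => lt y x).

(* (T, lt) is (order-isomorphic to) the ordinal ω2: a well-order whose
   countable-predecessor part (= ω1) is such that every proper initial
   segment has size <= |ω1|, while T itself has size > |ω1|. *)
Definition is_omega2 {T : Type} (lt : T -> T -> Prop) : Prop :=
  strict_wellorder lt /\
  (forall a : T, injects (fun x => lt x a) (omega1_part lt)) /\
  ~ injects (fun _ : T => True) (omega1_part lt).

(* Connectedness of the graph with vertex set V and edge relation E
   (Diestel's convention: nonempty, and any two vertices are joined by a path). *)
Definition connected_graph {T : Type} (V : T -> Prop) (E : T -> T -> Prop) : Prop :=
  (exists v, V v) /\
  forall u v, V u -> V v ->
    clos_refl_trans T (fun x y => V x /\ V y /\ E x y) u v.

Definition highly_connected {T : Type} (X : T -> Prop) (E : T -> T -> Prop) : Prop :=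
  forall Y : T -> Prop,
    (forall y, Y y -> X y) -> card_lt Y X ->
    connected_graph (fun x => X x /\ ~ Y x) E.

(* Main.v *)
Require Import Defs.
From Stdlib Require Import Classical ClassicalEpsilon FunctionalExtensionality Lia.

Lemma countable_sub {U : Type} (P Q : U -> Prop) :
  countable P -> (forall x, Q x -> P x) -> countable Q.
Proof.
  unfold countable, injects. intros [h [_ Hi]] HQ. exists h. split; auto.
Qed.

Lemma countable_union {U : Type} (P Q : U -> Prop) :
  countable P -> countable Q -> countable (fun x => P x \/ Q x).
Proof.
  unfold countable, injects. intros [hP [_ HP]] [hQ [_ HQ]].
  exists (fun x => if excluded_middle_informative (P x) then 2 * hP x else S (2 * hQ x)).
  split; auto. intros x y Hx Hy.
  destruct (excluded_middle_informative (P x)); destruct (excluded_middle_informative (P y)); intro E.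
  - apply HP; auto; lia.
  - lia.
  - lia.
  - apply HQ; [destruct Hx; tauto | destruct Hy; tauto | lia].
Qed.

Lemma countable_image {U V : Type} (P : U -> Prop) (g : U -> V) :
  countable P -> countable (fun z => exists y, P y /\ z = g y).
Proof.
  unfold countable, injects. intros [h [_ Hi]].
  exists (fun z => match excluded_middle_informative (exists y, P y /\ z = g y) with
                   | left e => h (proj1_sig (constructive_indefinite_description _ e))
                   | right _ => 0 end).
  split; auto. intros z1 z2 H1 H2 E.
  destruct (excluded_middle_informative (exists y, P y /\ z1 = g y)) as [e1|n1]; [|contradiction].
  destruct (excluded_middle_informative (exists y, P y /\ z2 = g y)) as [e2|n2]; [|contradiction].
  destruct (constructive_indefinite_description _ e1) as [y1 [P1 Q1]].
  destruct (constructive_indefinite_description _ e2) as [y2 [P2 Q2]].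
  simpl in E. rewrite Q1, Q2, (Hi y1 y2 P1 P2 E). reflexivity.
Qed.

Lemma countable_single {U : Type} (s : U) : countable (fun z => z = s).
Proof.
  unfold countable, injects. exists (fun _ => 0). split; auto. intros; subst; auto.
Qed.

Lemma injects_trans {U V W : Type} (P : U -> Prop) (Q : V -> Prop) (R : W -> Prop) :
  injects P Q -> injects Q R -> injects P R.
Proof.
  intros [f [Hf If]] [g [Hg Ig]]. exists (fun x => g (f x)). split; auto.
Qed.

Lemma pair_rec (T : Type) (lt : T -> T -> Prop) (wf : well_founded lt)
  (om : T -> Prop) (Hom : forall x, om x -> countable (fun y => lt y x))
  (S : T -> Prop) (HS : ~ countable S) (d : T) :
  exists f : T -> (T * T)%type, forall x, om x ->
    S (fst (f x)) /\ S (snd (f x)) /\ fst (f x) <> snd (f x) /\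
    forall y, lt y x -> fst (f y) <> fst (f x) /\ fst (f y) <> snd (f x) /\
                       snd (f y) <> fst (f x) /\ snd (f y) <> snd (f x).
Proof.
  pose (P := fun x (rec : forall y, lt y x -> (T * T)%type) (p : (T * T)%type) =>
    S (fst p) /\ S (snd p) /\ fst p <> snd p /\
    forall y (h : lt y x), fst (rec y h) <> fst p /\ fst (rec y h) <> snd p /\
                           snd (rec y h) <> fst p /\ snd (rec y h) <> snd p).
  pose (F := fun x rec => epsilon (inhabits (d, d)) (P x rec)).
  pose (f := Fix wf (fun _ => (T * T)%type) F).
  exists f. intros x Hx.
  assert (Eq : f x = F x (fun y _ => f y)).
  { assert (ext : forall x0 (f1 f2 : forall y, lt y x0 -> (T * T)%type),
              (forall y p, f1 y p = f2 y p) -> F x0 f1 = F x0 f2).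
    { intros x0 f1 f2 H.
      assert (f1 = f2) by (extensionality y; extensionality p; auto). subst; reflexivity. }
    exact (Fix_eq wf (fun _ => (T * T)%type) F ext x). }
  pose (C := fun z => (exists y, lt y x /\ z = fst (f y)) \/ (exists y, lt y x /\ z = snd (f y))).
  assert (HC : countable C).
  { apply countable_union; apply countable_image; auto. }
  assert (ex : exists p, P x (fun y _ => f y) p).
  { destruct (classic (exists s1, S s1 /\ ~ C s1)) as [[s1 [S1 C1]]|N1].
    2: { exfalso. apply HS. apply (countable_sub C); auto.
         intros z Sz. apply NNPP; intro; apply N1; eauto. }
    destruct (classic (exists s2, S s2 /\ ~ (C s2 \/ s2 = s1))) as [[s2 [S2 C2]]|N2].
    2: { exfalso. apply HS. apply (countable_sub (fun z => C z \/ z = s1)).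
         - apply countable_union; auto; apply countable_single.
         - intros z Sz. apply NNPP; intro; apply N2; eauto. }
    exists (s1, s2). unfold P; simpl. repeat split; auto.
    all: intro e; try subst s1; try subst s2; unfold C in *; solve [ apply C1; left; eauto | apply C1; right; eauto
                        | apply C2; left; eauto | apply C2; right; eauto
                        | apply C2; right; auto ]. }
  pose proof (epsilon_spec (inhabits (d, d)) (P x (fun y _ => f y)) ex) as Hp.
  rewrite Eq. unfold F. destruct Hp as [H1 [H2 [H3 H4]]].
  repeat split; auto; destruct (H4 y H) as [? [? [? ?]]]; auto.
Qed.

Lemma key_inj (T : Type) (lt : T -> T -> Prop) (wf : well_founded lt)
  (tri : forall x y, lt x y \/ x = y \/ lt y x)
  (om : T -> Prop) (Hom : forall x, om x -> countable (fun y => lt y x))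
  (A B Y S : T -> Prop) (iA : injects A om) (iB : injects B om)
  (HSY : forall z, S z -> Y z) (HS : ~ countable S) :
  injects (fun z => A z \/ B z) Y.
Proof.
  destruct (classic (exists t : T, True)) as [[d _]|N].
  2: { exfalso. apply HS. exists (fun _ => 0). split; auto.
    intros x; exfalso; apply N; exists x; exact I. }
  destruct iA as [ga [gaom gainj]]. destruct iB as [gb [gbom gbinj]].
  destruct (pair_rec T lt wf om Hom S HS d) as [f spec].
  assert (sep : forall p q, om p -> om q -> p <> q ->
     fst (f p) <> fst (f q) /\ fst (f p) <> snd (f q) /\
     snd (f p) <> fst (f q) /\ snd (f p) <> snd (f q)).
  { intros p q Hp Hq Hpq. destruct (tri p q) as [l|[e|l]].
    - destruct (spec q Hq) as [_ [_ [_ Hs]]]. apply Hs; auto.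
    - contradiction.
    - destruct (spec p Hp) as [_ [_ [_ Hs]]]. destruct (Hs q l) as [? [? [? ?]]].
      repeat split; auto. }
  exists (fun z => if excluded_middle_informative (A z) then fst (f (ga z)) else snd (f (gb z))).
  split.
  - intros z Hz. destruct (excluded_middle_informative (A z)) as [a|na].
    + apply HSY. apply (spec _ (gaom z a)).
    + apply HSY. destruct Hz as [a|b]; [contradiction|]. apply (spec _ (gbom z b)).
  - intros z1 z2 H1 H2.
    destruct (excluded_middle_informative (A z1)) as [a1|na1];
    destruct (excluded_middle_informative (A z2)) as [a2|na2]; intro E.
    + destruct (classic (ga z1 = ga z2)) as [e|n]; [apply gainj; auto|].
      exfalso. destruct (sep _ _ (gaom z1 a1) (gaom z2 a2) n) as [? _]; auto.
    + assert (b2 : B z2) by tauto. exfalso.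
      destruct (classic (ga z1 = gb z2)) as [e|n].
      * rewrite e in E. destruct (spec _ (gbom z2 b2)) as [_ [_ [? _]]]; auto.
      * destruct (sep _ _ (gaom z1 a1) (gbom z2 b2) n) as [_ [? _]]; auto.
    + assert (b1 : B z1) by tauto. exfalso.
      destruct (classic (gb z1 = ga z2)) as [e|n].
      * rewrite e in E. destruct (spec _ (gaom z2 a2)) as [_ [_ [? _]]]; auto.
      * destruct (sep _ _ (gbom z1 b1) (gaom z2 a2) n) as [_ [_ [? _]]]; auto.
    + assert (b1 : B z1) by tauto. assert (b2 : B z2) by tauto.
      destruct (classic (gb z1 = gb z2)) as [e|n]; [apply gbinj; auto|].
      exfalso. destruct (sep _ _ (gbom z1 b1) (gbom z2 b2) n) as [_ [_ [_ ?]]]; auto.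
Qed.

Theorem mainTheorem3
  (T : Type) (lt : T -> T -> Prop) (Homega2 : is_omega2 lt)
  (c : T -> T -> nat)
  (Hc_sym : forall x y, x <> y -> c x y = c y x)
  (k : nat) (A B : T -> Prop)
  (HA_sub : forall x, A x -> omega1_part lt x)
  (HA_card : equipotent A (omega1_part lt))
  (HB_sub : forall x, B x -> ~ omega1_part lt x)
  (HB_card : equipotent B (omega1_part lt))
  (H1 : forall a0 a1, A a0 -> A a1 ->
          ~ countable (fun b => B b /\ c a0 b = k /\ c a1 b = k))
  (H2 : forall b0, B b0 ->
          ~ countable (fun a => A a /\ c a b0 = k)) :
  highly_connected (fun x => A x \/ B x)
    (fun x y => x <> y /\ c x y = k).
Proof.
  destruct Homega2 as [[Hirr [Htr [Htri Hwf]]] [Hseg Hnot]].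
  assert (om_unc : ~ countable (omega1_part lt)).
  { intro Hc. apply Hnot. exists (fun x => x). split; auto.
    intros x _. unfold omega1_part. eapply injects_trans; [apply Hseg | exact Hc]. }
  assert (A_unc : ~ countable A).
  { intro Hc. apply om_unc. eapply injects_trans; [exact (proj2 HA_card) | exact Hc]. }
  assert (disj : forall x, A x -> B x -> False).
  { intros x a b. exact (HB_sub x b (HA_sub x a)). }
  intros Y HYX [HYinj HYnot].
  assert (key : forall S, ~ countable S -> exists s, S s /\ ~ Y s).
  { intros S HS. apply NNPP. intro N. apply HYnot.
    apply (key_inj T lt Hwf Htri (omega1_part lt) (fun x h => h) A B Y S
             (proj1 HA_card) (proj1 HB_card)); auto.
    intros z Sz. apply NNPP. intro; apply N; eauto. }
  set (V := fun x => (A x \/ B x) /\ ~ Y x).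
  set (E := fun x y => x <> y /\ c x y = k).
  assert (edge : forall x y, V x -> V y -> x <> y -> c x y = k ->
      Relation_Operators.clos_refl_trans T (fun x y => V x /\ V y /\ E x y) x y).
  { intros x y Vx Vy n e. apply Relation_Operators.rt_step. unfold E; auto. }
  assert (AA : forall u v, A u -> ~ Y u -> A v -> ~ Y v ->
      Relation_Operators.clos_refl_trans T (fun x y => V x /\ V y /\ E x y) u v).
  { intros u v au yu av yv.
    destruct (key _ (H1 u v au av)) as [b [[bb [e1 e2]] yb]].
    assert (Vb : V b) by (unfold V; auto).
    apply Relation_Operators.rt_trans with b.
    - apply edge; unfold V; auto. intro; subst; eauto.
    - apply edge; unfold V; auto. intro; subst; eauto.
      rewrite Hc_sym; auto. intro; subst; eauto. }
  assert (toA : forall u, V u -> exists a, A a /\ ~ Y a /\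
      Relation_Operators.clos_refl_trans T (fun x y => V x /\ V y /\ E x y) u a).
  { intros u Vu. destruct Vu as [[au|bu] yu].
    - exists u. refine (conj au (conj yu _)). apply Relation_Operators.rt_refl.
    - destruct (key _ (H2 u bu)) as [a [[aa e] ya]].
      exists a. refine (conj aa (conj ya _)). apply edge; unfold V; auto.
      intro; subst; eauto. rewrite Hc_sym; auto. intro; subst; eauto. }
  split.
  - destruct (key _ A_unc) as [a [aa ya]]. exists a. unfold V; auto.
  - intros u v Vu Vv.
    destruct (toA u Vu) as [a [aa [ya Ha]]].
    destruct (toA v Vv) as [b [bb [yb Hb]]].
    apply Relation_Operators.rt_trans with a; auto.
    apply Relation_Operators.rt_trans with b; auto.
    clear - Hb Hc_sym. induction Hb.
    + apply Relation_Operators.rt_step. destruct H as [? [? [n e]]].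
      unfold E in *. refine (conj H0 (conj H _)). split; [congruence|].
      rewrite Hc_sym; auto.
    + apply Relation_Operators.rt_refl.
    + eapply Relation_Operators.rt_trans; eauto.
Qed.
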